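(* Assume (A1)–(A3) and $\alpha>1$, and let a value $A>0$ be given. Among all concentration profiles $C$ with $AUC[C]=A$, the one maximizing $LR_{max}[C]$ is $$C(t)=\begin{cases} c_{opt}, & 0\le t\le T,\\ 0,& t>T,\end{cases}\qquad T=\frac{A}{c_{opt}},$$ where $c_{opt}$ is the unique solution in $(0,\infty)$ of $k'(c)=\frac{k(c)-r}{c}$; and the maximal log-reduction attained is $$LR_{opt}=\frac{1}{\ln(10)}\cdot\frac{k(c_{opt})-r}{c_{opt}}\cdot A.$$
   Context: Let $r>0$ and let $k:[0,\infty)\to[0,\infty)$ satisfy: (A1) $k(0)=0$, $k$ is continuous and strictly increasing on $[0,\infty)$, and twice differentiable on $(0,\infty)$; (A2) $\lim_{c\to\infty}k(c)=k_{max}<\infty$; (A3) either (i) (concave case) $k''(c)<0$ for all $c>0$, or (ii) (sigmoidal case) there is $c_{infl}>0$ with $k''(c)>0$ for $0<c<c_{infl}$ and $k''(c)<0$ for $c>c_{infl}$. Set $\alpha=k_{max}/r$. A concentration profile is a non-negative function $C\in L^1[0,\infty)$, with $AUC[C]=\int_0^\infty C(t)\,dt$. For $T\ge0$, $LR(T)=\frac{1}{\ln 10}\int_0^T[k(C(t))-r]\,dt$, and $LR_{max}[C]=\max_{T\ge0}LR(T)$. *)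

(* Defs.v *)
From HB Require Import structures.
From mathcomp Require Import all_boot all_order all_algebra.
From mathcomp Require Import all_classical all_reals all_analysis.
Set Implicit Arguments. Unset Strict Implicit. Unset Printing Implicit Defensive.
Import Order.TTheory GRing.Theory Num.Theory.
Import numFieldNormedType.Exports.
Local Open Scope classical_set_scope.
Local Open Scope ring_scope.

Section Defs.
Context {R : realType}.
Local Notation mu := (@lebesgue_measure R).

Definition profile (C : R -> R) : Prop :=
  (forall t, 0 <= t -> 0 <= C t) /\
  mu.-integrable `[0%R, +oo[ (fun t => (C t)%:E).

Definition AUC (C : R -> R) : \bar R :=
  (\int[mu]_(t in `[0%R, +oo[) (C t)%:E)%E.

Definition LR (k : R -> R) (r : R) (C : R -> R) (T : R) : R :=
  (ln 10)^-1 * Rintegral mu `[0%R, T] (fun t => k (C t) - r).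

(* LR_max[C] = max_{T >= 0} LR(T), rendered as the supremum (in \bar R);
   it coincides with the maximum whenever the maximum exists. *)
Definition LRmax (k : R -> R) (r : R) (C : R -> R) : \bar R :=
  ereal_sup [set (LR k r C T)%:E | T in `[0%R, +oo[].

Definition box (c T : R) (t : R) : R :=
  if (0 <= t) && (t <= T) then c else 0.

End Defs.

(* Main.v *)
Require Import Defs.
From HB Require Import structures.
From mathcomp Require Import all_boot all_order all_algebra.
From mathcomp Require Import all_classical all_reals all_analysis.
From mathcomp Require Import ring lra.
Import Order.TTheory GRing.Theory Num.Theory.
Import numFieldNormedType.Exports.
Local Open Scope classical_set_scope.
Local Open Scope ring_scope.
Set Implicit Arguments. Unset Strict Implicit.
Lemma isd_lin (R : realType) (s x : R) : is_derive x 1 (fun y => s * y) s.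
Proof.
have := is_deriveZ s (is_derive_id x (1:R)).
by rewrite /GRing.scale /= mulr1.
Qed.

Lemma isd_k (R : realType) (k : R -> R) x : derivable k x 1 -> is_derive x 1 k (derive1 k x).
Proof. by move=> h; rewrite derive1E; exact: derivableP. Qed.

Lemma fermat (R : realType) (k : R -> R) (r s c : R) : 0 < c ->
  (forall x, 0 < x -> derivable k x 1) ->
  (forall x, 0 < x -> k x - r - s * x <= k c - r - s * c) -> derive1 k c = s.
Proof.
move=> c0 dk hmax.
have hd (x : R) : 0 < x -> is_derive x 1 (fun y => k y - s * y) (derive1 k x - s).
  move=> x0; apply: is_deriveB; [exact: isd_k (dk x x0) | exact: isd_lin].
have H0 : is_derive c 1 (fun y => k y - s * y) 0.
  apply: (@derive1_at_max _ _ 0 (c + 1)).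
  - lra.
  - by move=> t; rewrite in_itv /= => /andP [t0 _]; by case: (hd t t0).
  - rewrite in_itv /=; apply/andP; split => //; lra.
  - move=> t; rewrite in_itv /= => /andP [t0 _]; have := hmax t t0; lra.
have := @derive_val _ _ _ _ _ _ _ (hd c c0); rewrite (@derive_val _ _ _ _ _ _ _ H0) => /eqP; rewrite eq_sym subr_eq0.
by move/eqP.
Qed.

Definition hh (R : realType) (k : R -> R) (r : R) (c : R) := c * derive1 k c - k c + r.

Lemma hh_deriv (R : realType) (k : R -> R) (r c : R) :
  derivable k c 1 -> derivable (derive1 k) c 1 ->
  is_derive c 1 (hh k r) (c * derive1 (derive1 k) c).
Proof.
move=> d1 d2.
have HM : is_derive c 1 ((id : R -> R) * derive1 k) (c *: derive1 (derive1 k) c + derive1 k c *: 1).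
  exact: is_deriveM (is_derive_id c 1) (isd_k d2).
have HB := is_deriveB HM (isd_k d1).
have HD := is_deriveD HB (is_derive_cst r c 1).
have -> : hh k r = ((id : R -> R) * derive1 k - k + cst r).
  by apply/funext => x; rewrite /hh.
eapply is_derive_eq; first exact HD.
rewrite /GRing.scale /=; ring.
Qed.

Lemma strict_decr (R : realType) (f df : R -> R) (L : R) :
  (forall x, L < x -> is_derive x 1 f (df x) /\ df x < 0) ->
  forall x y, L < x -> x < y -> f y < f x.
Proof.
move=> hf x y Lx xy.
have Ly : L < y by apply: lt_trans xy.
have cont : {within `[x, y], continuous f}.
  apply: derivable_within_continuous => z; rewrite in_itv /= => /andP [xz _].
  by case: (hf z (lt_le_trans Lx xz)) => [[]].
have der : forall z, z \in `]x, y[ -> is_derive z 1 f (df z).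
  move=> z; rewrite in_itv /= => /andP [xz _]; exact: (hf z (lt_trans Lx xz)).1.
have [z + E] := MVT xy der cont.
rewrite in_itv /= => /andP [xz _].
have := (hf z (lt_trans Lx xz)).2 => dz.
have : df z * (y - x) < 0 by rewrite pmulr_llt0 // subr_gt0.
lra.
Qed.

Lemma hh_pos (R : realType) (k : R -> R) (r cinfl c : R) :
  0 < r -> k 0 = 0 -> {within `[0%R, +oo[, continuous k} ->
  (forall c, 0 < c -> derivable k c 1 /\ derivable (derive1 k) c 1) ->
  (forall c, 0 < c -> c < cinfl -> 0 < derive1 (derive1 k) c) ->
  0 < c -> c <= cinfl -> 0 < hh k r c.
Proof.
move=> r0 k0 kc kd kpos c0 cc.
have der1 : forall z, z \in `]0, c[ -> is_derive z 1 k (derive1 k z).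
  move=> z; rewrite in_itv /= => /andP [z0 _]; exact: isd_k (kd z z0).1.
have cont1 : {within `[0, c], continuous k}.
  apply: continuous_subspaceW kc => z /=; rewrite !in_itv /= => /andP [-> _] //.
have [xi + E1] := MVT c0 der1 cont1.
rewrite in_itv /= => /andP [xi0 xic].
have der2 : forall z, z \in `]xi, c[ -> is_derive z 1 (derive1 k) (derive1 (derive1 k) z).
  move=> z; rewrite in_itv /= => /andP [xz _]; exact: isd_k (kd z (lt_trans xi0 xz)).2.
have cont2 : {within `[xi, c], continuous (derive1 k)}.
  apply: derivable_within_continuous => z; rewrite in_itv /= => /andP [xz _].
  exact: (kd z (lt_le_trans xi0 xz)).2.
have [eta + E2] := MVT xic der2 cont2.
rewrite in_itv /= => /andP [xe ec].
have pe := kpos eta (lt_trans xi0 xe) (lt_le_trans ec cc).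
rewrite /hh; move: E1 E2; rewrite k0 subr0 => E1 E2.
have : 0 < derive1 (derive1 k) eta * (c - xi) by rewrite mulr_gt0 // subr_gt0.
move=> H; have : 0 < c * (derive1 (derive1 k) eta * (c - xi)) by rewrite mulr_gt0.
nra.
Qed.

Lemma hh_unique (R : realType) (k : R -> R) (r : R) :
  0 < r -> k 0 = 0 -> {within `[0%R, +oo[, continuous k} ->
  (forall c, 0 < c -> derivable k c 1 /\ derivable (derive1 k) c 1) ->
  ((forall c, 0 < c -> derive1 (derive1 k) c < 0) \/
   (exists cinfl, 0 < cinfl /\
      (forall c, 0 < c -> c < cinfl -> 0 < derive1 (derive1 k) c) /\
      (forall c, cinfl < c -> derive1 (derive1 k) c < 0))) ->
  forall c1 c2, 0 < c1 -> 0 < c2 -> hh k r c1 = 0 -> hh k r c2 = 0 -> c1 = c2.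
Proof.
move=> r0 k0 kc kd A3.
have main : forall L, 0 <= L -> (forall x, L < x -> derive1 (derive1 k) x < 0) ->
    forall c1 c2, L < c1 -> L < c2 -> hh k r c1 = 0 -> hh k r c2 = 0 -> c1 = c2.
  move=> L L0 neg.
  have sd := @strict_decr R (hh k r) (fun x => x * derive1 (derive1 k) x) L.
  have H : forall x, L < x -> is_derive x 1 (hh k r) (x * derive1 (derive1 k) x) /\
      x * derive1 (derive1 k) x < 0.
    move=> x Lx; have x0 : 0 < x by apply: le_lt_trans Lx.
    split; first by apply: hh_deriv; [exact: (kd x x0).1|exact: (kd x x0).2].
    by rewrite pmulr_rlt0 // neg.
  move=> c1 c2 L1 L2 h1 h2.
  case: (ltgtP c1 c2) => // [c12|c21].
    by have := sd H c1 c2 L1 c12; rewrite h1 h2 ltxx.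
  by have := sd H c2 c1 L2 c21; rewrite h1 h2 ltxx.
case: A3 => [conc|[ci [ci0 [pos neg]]]].
  by apply: (main 0) => // x x0; exact: conc.
move=> c1 c2 c10 c20 h1 h2.
have gt : forall c, 0 < c -> hh k r c = 0 -> ci < c.
  move=> c c0 hc; rewrite ltNge; apply/negP => cci.
  by have := hh_pos r0 k0 kc kd pos c0 cci; rewrite hc ltxx.
exact: (main ci (ltW ci0) neg c1 c2 (gt c1 c10 h1) (gt c2 c20 h2)).
Qed.
Lemma k_lt_kmax (R : realType) (k : R -> R) (kmax : R) :
  (forall x y, 0 <= x -> x < y -> k x < k y) ->
  k x @[x --> +oo] --> kmax -> forall x, 0 <= x -> k x < kmax.
Proof.
move=> mono hk x x0.
have x1 : 0 <= x + 1 by rewrite addr_ge0.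
apply: (lt_le_trans (mono x (x+1) x0 _)); first by rewrite ltrDl.
rewrite -(cvg_lim _ hk) //; apply: limr_ge; first by apply/cvg_ex; exists kmax.
near=> y; apply/ltW/mono => //; near: y; apply: nbhs_pinfty_gt; exact: num_real.
Unshelve. all: by end_near. Qed.

Lemma k_big (R : realType) (k : R -> R) (kmax r : R) :
  k x @[x --> +oo] --> kmax -> r < kmax -> exists c, 0 < c /\ r < k c.
Proof.
move=> hk rk.
have : \forall x \near +oo, 0 < x /\ r < k x.
  near=> x; split; first by near: x; apply: nbhs_pinfty_gt; exact: num_real.
  have : `|kmax - k x| < kmax - r.
    near: x; move/cvgrPdist_lt: hk; apply; by rewrite subr_gt0.
  move=> /(le_lt_trans (ler_norm _)) H; lra.
case=> M [_ HM]; exists (`|M| + 1); apply: HM.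
by rewrite (le_lt_trans (ler_norm M)) // ltrDl.
Unshelve. all: by end_near. Qed.

Lemma k_small (R : realType) (k : R -> R) (eps : R) :
  {within `[0%R, +oo[, continuous k} -> k 0 = 0 -> 0 < eps ->
  exists d, 0 < d /\ k d < eps.
Proof.
move=> /continuous_within_itvcyP [_ hk] k0 e0.
move: hk; rewrite k0 => /cvgrPdist_lt /(_ eps e0) [d /= d0 Hd].
exists (d / 2); split; first by rewrite divr_gt0.
have := Hd (d / 2); rewrite /= sub0r normrN.
have d2 : 0 < d / 2 by rewrite divr_gt0.
rewrite gtr0_norm // => /(_ _ d2) H.
have : d / 2 < d by lra.
by move=> /H; rewrite sub0r normrN; apply: le_lt_trans; exact: ler_norm.
Qed.

Lemma g_cont (R : realType) (k : R -> R) (r x : R) : 0 < x -> derivable k x 1 ->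
  {for x, continuous (fun c => (k c - r) / c)}.
Proof.
move=> x0 dk.
apply: continuousM.
  apply: continuousB; last exact: cst_continuous.
  exact/differentiable_continuous/derivable1_diffP.
apply: (@continuousV _ _ id); first by rewrite gt_eqF.
by move=> ?; apply.

Qed.

Lemma copt_exists (R : realType) (k : R -> R) (r kmax : R) :
  0 < r -> k 0 = 0 -> {within `[0%R, +oo[, continuous k} ->
  (forall x y, 0 <= x -> x < y -> k x < k y) ->
  (forall c, 0 < c -> derivable k c 1 /\ derivable (derive1 k) c 1) ->
  k x @[x --> +oo] --> kmax -> r < kmax ->
  exists copt s, [/\ 0 < copt, k copt - r = s * copt, 0 < s,
     (forall c, 0 <= c -> k c - r <= s * c) & derive1 k copt = s].
Proof.
move=> r0 k0 kc mono kd hk rk.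
have [c0 [c00 rc0]] := k_big hk rk.
have [d [d0 kd_r]] := k_small kc k0 r0.
have dc0 : d < c0.
  rewrite ltNge; apply/negP; rewrite le_eqVlt => /predU1P [e|lt].
    by move: rc0; rewrite e => /(lt_trans kd_r); rewrite ltxx.
  by have := mono _ _ (ltW c00) lt; lra.
set m := (k c0 - r) / c0.
have m0 : 0 < m by rewrite divr_gt0 // subr_gt0.
have km0 : m * c0 = k c0 - r by rewrite /m mulrVK // unitfE gt_eqF.
set b := c0 + (kmax - r) / m.
have mb : kmax - r < m * b.
  have e : m * ((kmax - r) / m) = kmax - r by rewrite mulrC divfK // gt_eqF.
  rewrite /b mulrDr e; have : 0 < m * c0 by rewrite mulr_gt0.
  lra.
have c0b : c0 <= b by rewrite /b lerDl ltW // divr_gt0 // subr_gt0.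
have ab : d <= b by apply: (le_trans (ltW dc0)).
set g := fun c => (k c - r) / c.
have gc : {within `[d, b], continuous g}.
  apply: continuous_in_subspaceT => x; rewrite inE /= in_itv /= => /andP [dx _].
  have x0 : 0 < x by apply: lt_le_trans dx.
  exact: g_cont x0 (kd x x0).1.
have [copt coptin gmax] := EVT_max ab gc.
move: (coptin); rewrite in_itv /= => /andP [dco cob].
have co0 : 0 < copt by apply: lt_le_trans dco.
set s := g copt.
have ms : m <= s by apply: gmax; rewrite in_itv /= (ltW dc0) c0b.
have s0 : 0 < s by apply: lt_le_trans ms.
have eqs : k copt - r = s * copt by rewrite /s /g divfK // gt_eqF.
have bound : forall c, 0 <= c -> k c - r <= s * c.
  move=> c; rewrite le_eqVlt => /predU1P [<-|c0']; first by rewrite k0 mulr0; lra.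
  case: (ltP c d) => cd.
    have := mono _ _ (ltW c0') cd; have : 0 < s * c by rewrite mulr_gt0.
    lra.
  case: (leP c b) => cb.
    have := gmax c; rewrite in_itv /= cd cb => /(_ isT).
    by rewrite /s /g ler_pdivrMr // mulrC.
  have := k_lt_kmax mono hk (ltW c0'); have : m * b < s * c.
    have b0 : 0 < b by apply: lt_le_trans c0b.
    nra.
  lra.
exists copt, s; split => //.
apply: (@fermat _ k r s copt co0) => [x x0|x x0]; first exact: (kd x x0).1.
have := bound x (ltW x0); lra.
Qed.

Lemma kp_nd (R : realType) (k : R -> R) :
  (forall x y, 0 <= x -> x < y -> k x < k y) ->
  nondecreasing_fun (fun x => k (Num.max x 0)).
Proof.
move=> mono x y xy /=.
have h : Num.max x 0 <= Num.max y 0 by rewrite ge_max !le_max xy lexx !orbT.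
move: h; rewrite le_eqVlt => /predU1P [->//|lt].
by apply/ltW/mono => //; rewrite le_max lexx orbT.
Qed.

Lemma kC_meas (R : realType) (k : R -> R) (r : R) (C : R -> R) (D : set R) :
  (forall x y, 0 <= x -> x < y -> k x < k y) ->
  measurable D -> D `<=` `[0%R, +oo[ -> profile C ->
  measurable_fun D (fun t => k (C t) - r).
Proof.
move=> mono mD sD [C0 iC].
have mC : measurable_fun D C.
  apply/measurable_realfun.measurable_EFinP; apply: measurable_funS (integrableP _ _ _ iC).1 => //.
apply: measurable_realfun.measurable_funB => //.
apply: (eq_measurable_fun (fun t => k (Num.max (C t) 0))).
  move=> t; rewrite inE => /sD; rewrite /= in_itv /= andbT => t0.
  by rewrite max_l // C0.
have H := measurable_realfun.nondecreasing_measurable measurableT (kp_nd mono).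
exact: (measurableT_comp H mC).
Qed.

Lemma kC_int (R : realType) (k : R -> R) (r kmax : R) (C : R -> R) (a b : R) :
  0 <= r -> k 0 = 0 ->
  (forall x y, 0 <= x -> x < y -> k x < k y) ->
  (forall x, 0 <= x -> k x < kmax) -> 0 <= a ->
  profile C ->
  (@lebesgue_measure R).-integrable `[a, b] (EFin \o (fun t => k (C t) - r)).
Proof.
move=> r0 k0 mono kb a0 pC.
apply: measurable_bounded_integrable => //.
- by have := @lebesgue_measure_itv R `[a, b]; move=> /= ->; case: ifP => // _; exact: ltry.
- apply: kC_meas => // t /=; rewrite !in_itv /= => /andP [at_ _].
  by rewrite (le_trans a0 at_).
- exists (kmax + r); split; first exact: num_real.
  move=> M HM x /=; rewrite in_itv /= => /andP [ax _].
  have Cx : 0 <= C x by apply: pC.1; exact: le_trans a0 ax.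
  have k1 : 0 <= k (C x).
    move: Cx; rewrite le_eqVlt => /predU1P [<-|Cx]; first by rewrite k0.
    by rewrite -k0; apply/ltW/mono.
  have k2 := kb _ Cx.
  rewrite ler_norml; apply/andP; split; lra.
Qed.

Lemma mu_itv (R : realType) (a b : R) : a <= b ->
  (@lebesgue_measure R) `[a, b] = (b - a)%:E.
Proof.
move=> ab; have := @lebesgue_measure_itv R `[a, b]; move=> /= ->.
case: ifP => /=; first by rewrite EFinB.
move/negbT; rewrite lte_fin -leNgt => ba.
have -> : b = a by apply/eqP; rewrite eq_le ba ab.
by rewrite subrr.
Qed.

Lemma C_int (R : realType) (C : R -> R) (D : set R) :
  measurable D -> D `<=` `[0%R, +oo[ -> profile C ->
  (@lebesgue_measure R).-integrable D (EFin \o C).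
Proof. by move=> mD sD pC; apply: integrableS pC.2. Qed.

Lemma RintC_le (R : realType) (C : R -> R) (A : R) (D : set R) :
  measurable D -> D `<=` `[0%R, +oo[ -> profile C -> AUC C = A%:E ->
  \int[@lebesgue_measure R]_(t in D) C t <= A.
Proof.
move=> mD sD pC hA.
rewrite /Rintegral -lee_fin fineK; last exact: integrable_fin_num (C_int mD sD pC).
rewrite -hA /AUC; apply: ge0_subset_integral => //.
- exact: (integrableP _ _ _ pC.2).1.
- by move=> x /=; rewrite in_itv /= andbT => x0; rewrite lee_fin pC.1.
Qed.

Lemma cst_int (R : realType) (a b c : R) :
  (@lebesgue_measure R).-integrable `[a, b] (EFin \o (fun _ => c)).
Proof.
apply: measurable_bounded_integrable => //.
- by have := @lebesgue_measure_itv R `[a, b]; move=> /= ->; case: ifP => // _; exact: ltry.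
- exists `|c|; split; first exact: num_real.
  by move=> M HM x _ /=; apply: ltW.
Qed.

Lemma bound_general (R : realType) (k : R -> R) (r kmax A mu0 beta : R) (C : R -> R) (T : R) :
  0 <= r -> k 0 = 0 ->
  (forall x y, 0 <= x -> x < y -> k x < k y) ->
  (forall x, 0 <= x -> k x < kmax) ->
  (forall c, 0 <= c -> k c - r <= mu0 * c - beta) -> 0 <= mu0 ->
  profile C -> AUC C = A%:E -> 0 <= T ->
  \int[@lebesgue_measure R]_(t in `[0%R, T]) (k (C t) - r) <= mu0 * A - beta * T.
Proof.
move=> r0 k0 mono kb hb mu00 pC hA T0.
have sub : `[0%R, T] `<=` `[0%R, +oo[.
  by move=> t /=; rewrite !in_itv /= => /andP [-> _].
have iC := C_int (measurable_itv `[0%R, T]) sub pC.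
have iCm : (@lebesgue_measure R).-integrable `[0%R, T] (EFin \o (fun t => mu0 * C t)).
  by apply: eq_integrable (integrableZl _ mu0 iC) => // t _.
have icst := @cst_int R 0 T beta.
apply: (@le_trans _ _ (\int[@lebesgue_measure R]_(t in `[0%R, T]) (mu0 * C t - beta))).
  apply: le_Rintegral => //.
  - exact: (kC_int T r0 k0 mono kb (lexx 0) pC).
  - by apply: eq_integrable (integrableB _ iCm icst) => // t _.
  - move=> t /=; rewrite in_itv /= => /andP [t0 _]; apply: hb; exact: pC.1.
rewrite RintegralB // RintegralZl // Rintegral_cst //.
have := @mu_itv R 0 T T0; move=> /= ->; rewrite /= subr0.
rewrite lerD2r ler_wpM2l //; exact: RintC_le.
Qed.

Lemma box_eq (R : realType) (c T t : R) :
  ((box c T t)%:E = ((EFin \o (fun _ => c)) \_ `[0%R, T]%classic) t)%E.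
Proof.
rewrite patchE /box; case: (boolP (0 <= t <= T)) => h.
  by rewrite mem_set //= in_itv.
by rewrite memNset //= in_itv; exact/negP.
Qed.

Lemma box_profile (R : realType) (c T : R) : 0 < c -> 0 <= T ->
  profile (box c T) /\ AUC (box c T) = (c * T)%:E.
Proof.
move=> c0 T0.
have sub : `[0%R, T] `<=` `[0%R, +oo[.
  by move=> t /=; rewrite !in_itv /= => /andP [-> _].
have EI : `[0%R, +oo[%classic `&` `[0%R, T]%classic = `[0%R, T]%classic :> set R by rewrite setIidr.
split; first split.
- by move=> t _; rewrite /box; case: ifP => // _; exact: ltW.
- have h : (@lebesgue_measure R).-integrable `[0%R, +oo[ ((EFin \o (fun _ => c)) \_ `[0%R, T]%classic).
    by apply/integrable_restrict => //; rewrite EI; exact: cst_int.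
  by apply: eq_integrable h => // t _; rewrite -box_eq.
rewrite /AUC; under eq_integral => t _ do rewrite box_eq.
rewrite -integral_mkcondr EI.
have := integral_cst (@lebesgue_measure R) (measurable_itv `[0%R, T]) c%:E.
move=> /= ->; have := @mu_itv R 0 T T0; move=> /= ->.
by rewrite subr0.
Qed.

Lemma box_LR (R : realType) (k : R -> R) (r c T : R) : 0 <= T ->
  LR k r (box c T) T = (ln 10)^-1 * ((k c - r) * T).
Proof.
move=> T0; rewrite /LR; congr (_ * _).
rewrite (eq_Rintegral _ (g := fun _ => k c - r)); last first.
  by move=> t; rewrite inE /= in_itv /= /box => ->.
rewrite Rintegral_cst //.
by have := @mu_itv R 0 T T0; move=> /= ->; rewrite subr0.
Qed.

Lemma ln10_gt0 (R : realType) : 0 < ln (10 : R).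
Proof. by apply: ln_gt0; rewrite ltr1n. Qed.

Lemma LRmax_le (R : realType) (k : R -> R) (r kmax A s : R) (C : R -> R) :
  0 <= r -> k 0 = 0 ->
  (forall x y, 0 <= x -> x < y -> k x < k y) ->
  (forall x, 0 <= x -> k x < kmax) ->
  (forall c, 0 <= c -> k c - r <= s * c) -> 0 <= s ->
  profile C -> AUC C = A%:E ->
  (LRmax k r C <= ((ln 10)^-1 * s * A)%:E)%E.
Proof.
move=> r0 k0 mono kb hb s0 pC hA.
apply: ge_ereal_sup => _ [T /= T0 <-]; rewrite lee_fin /LR -mulrA.
rewrite ler_pM2l ?invr_gt0 ?ln10_gt0 //.
have hb' : forall c, 0 <= c -> k c - r <= s * c - 0 by move=> c c0; rewrite subr0 hb.
have := bound_general r0 k0 mono kb hb' s0 pC hA (T := T).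
rewrite mul0r subr0; apply.
by move: T0; rewrite in_itv /= andbT.
Qed.

Lemma sup_attained (R : realType) (k : R -> R) (r kmax A s d : R) (C : R -> R) :
  0 < r -> k 0 = 0 ->
  (forall x y, 0 <= x -> x < y -> k x < k y) ->
  (forall x, 0 <= x -> k x < kmax) ->
  0 < s -> (forall c, 0 <= c -> k c - r <= s * c) ->
  0 < d -> k d < r / 2 ->
  0 < A -> profile C -> AUC C = A%:E ->
  LRmax k r C = ((ln 10)^-1 * s * A)%:E ->
  exists2 Ts, 0 <= Ts &
    \int[@lebesgue_measure R]_(t in `[0%R, Ts]) (k (C t) - r) = s * A.
Proof.
move=> r0 k0 mono kb s0 hb d0 kd A0 pC hA hLR.
have r2 : r / 2 + r / 2 = r by field.
set mu0 := s + r / (2 * d).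
have rd0 : 0 <= r / (2 * d) by rewrite divr_ge0 // ?mulr_ge0 // ltW.
have mu00 : 0 <= mu0 by rewrite addr_ge0 // ltW.
have hb2 : forall c, 0 <= c -> k c - r <= mu0 * c - r / 2.
  move=> c c0; case: (ltP c d) => cd.
    have := mono c d c0 cd; have : 0 <= mu0 * c by rewrite mulr_ge0.
    lra.
  have e : r / (2 * d) * d = r / 2 by field; rewrite gt_eqF.
  have : r / (2 * d) * d <= r / (2 * d) * c by rewrite ler_wpM2l.
  have := hb c c0; rewrite /mu0 (mulrDl s); lra.
set B := 2 * mu0 * A / r.
have B0 : 0 <= B.
  rewrite /B; apply: divr_ge0; last exact: ltW.
  by apply: mulr_ge0; [apply: mulr_ge0|apply: ltW].
have GB : forall T, B <= T ->
    \int[@lebesgue_measure R]_(t in `[0%R, T]) (k (C t) - r) <= 0.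
  move=> T BT; have T0 : 0 <= T by apply: le_trans BT.
  apply: (le_trans (bound_general (ltW r0) k0 mono kb hb2 mu00 pC hA T0)).
  have : r / 2 * B = mu0 * A by rewrite /B; field; rewrite gt_eqF.
  have : r / 2 * B <= r / 2 * T by rewrite ler_wpM2l // divr_ge0 // ltW.
  lra.
have iB := kC_int B (ltW r0) k0 mono kb (lexx 0) pC.
have Gc := parameterized_integral_continuous B0 iB.
have [Ts Tsin Tmax] := EVT_max B0 Gc.
move: Tsin; rewrite in_itv /= => /andP [Ts0 TsB].
exists Ts => //.
have hb' : forall c, 0 <= c -> k c - r <= s * c - 0 by move=> c c0; rewrite subr0 hb.
apply/eqP; rewrite eq_le; apply/andP; split.
  by have := bound_general (ltW r0) k0 mono kb hb' (ltW s0) pC hA Ts0; rewrite mul0r subr0.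
rewrite leNgt; apply/negP => lt.
have : (LRmax k r C <= ((ln 10)^-1 *
    Num.max (\int[@lebesgue_measure R]_(t in `[0%R, Ts]) (k (C t) - r)) 0)%:E)%E.
  apply: ge_ereal_sup => _ [T /= T0 <-]; rewrite lee_fin /LR.
  rewrite ler_pM2l ?invr_gt0 ?ln10_gt0 //.
  move: T0; rewrite in_itv /= andbT => T0.
  case: (leP B T) => BT.
    by rewrite le_max (GB T BT) orbT.
  rewrite le_max; apply/orP; left.
  by have := Tmax T; rewrite in_itv /= T0 (ltW BT); apply.
have sA : 0 < s * A by rewrite mulr_gt0.
rewrite hLR lee_fin -mulrA ler_pM2l ?invr_gt0 ?ln10_gt0 // le_max => /orP [h|h].
  by move: lt; rewrite ltNge h.
by move: sA; rewrite ltNge h.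
Qed.

Lemma ae_from_Ts (R : realType) (k : R -> R) (r kmax A s copt Ts : R) (C : R -> R) :
  0 < r -> k 0 = 0 ->
  (forall x y, 0 <= x -> x < y -> k x < k y) ->
  (forall x, 0 <= x -> k x < kmax) ->
  0 < s -> 0 < copt -> (forall c, 0 <= c -> k c - r <= s * c) ->
  (forall c, 0 < c -> k c - r = s * c -> c = copt) ->
  profile C -> AUC C = A%:E -> 0 <= Ts ->
  \int[@lebesgue_measure R]_(t in `[0%R, Ts]) (k (C t) - r) = s * A ->
  {ae (@lebesgue_measure R), forall t, 0 <= t -> C t = box copt (A / copt) t}.
Proof.
move=> r0 k0 mono kb s0 c0 hb uq pC hA Ts0 GTs.
have sub : `[0%R, Ts] `<=` `[0%R, +oo[.
  by move=> t /=; rewrite !in_itv /= => /andP [-> _].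
have iC := C_int (measurable_itv `[0%R, Ts]) sub pC.
have iCm : (@lebesgue_measure R).-integrable `[0%R, Ts] (EFin \o (fun t => s * C t)).
  by apply: eq_integrable (integrableZl _ s iC) => // t _.
have iK := kC_int Ts (ltW r0) k0 mono kb (lexx 0) pC.
have iQ : (@lebesgue_measure R).-integrable `[0%R, Ts]
    (EFin \o (fun t => s * C t - (k (C t) - r))).
  by apply: eq_integrable (integrableB _ iCm iK) => // t _.
have CA : \int[@lebesgue_measure R]_(t in `[0%R, Ts]) C t <= A.
  exact: RintC_le.
have CeqA : \int[@lebesgue_measure R]_(t in `[0%R, Ts]) C t = A.
  have : \int[@lebesgue_measure R]_(t in `[0%R, Ts]) (k (C t) - r) <=
         \int[@lebesgue_measure R]_(t in `[0%R, Ts]) (s * C t).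
    apply: le_Rintegral => // t /=; rewrite in_itv /= => /andP [t0 _].
    by apply: hb; apply: pC.1.
  rewrite RintegralZl // GTs ler_pM2l // => h.
  by apply/eqP; rewrite eq_le CA h.
have Q0 : \int[@lebesgue_measure R]_(t in `[0%R, Ts]) (s * C t - (k (C t) - r)) = 0.
  by rewrite RintegralB // RintegralZl // GTs CeqA subrr.
have pt : forall c, 0 <= c -> s * c - (k c - r) = 0 -> c = copt.
  move=> c; rewrite le_eqVlt => /predU1P [<-|cpos].
    by rewrite k0 mulr0 !sub0r opprK => /eqP; rewrite gt_eqF.
  by move=> /eqP; rewrite subr_eq0 => /eqP /esym; apply: uq.
have mQ := (integrableP _ _ _ iQ).1.
have ae1 : (EFin \o (fun t => s * C t - (k (C t) - r))) = (cst 0%E)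
    %[ae (@lebesgue_measure R) in `[0%R, Ts]%classic].
  apply: (ae_eq_integral_abs (@lebesgue_measure R) (measurable_itv _) mQ).1.
  have fin : (\int[@lebesgue_measure R]_(x in `[0%R, Ts])
      (EFin \o (fun t => (s * C t - (k (C t) - r))%R)) x)%E \is a fin_num.
    by apply: integrable_fin_num => //.
  under eq_integral => t ht.
    rewrite gee0_abs; last first.
      move: ht; rewrite inE /= in_itv /= => /andP [t0 _].
      by rewrite lee_fin subr_ge0 hb // pC.1.
    over.
  by rewrite -(fineK fin); move: Q0; rewrite /Rintegral => ->.
have sub2 : `]Ts, +oo[ `<=` `[0%R, +oo[.
  move=> t /=; rewrite !in_itv /= !andbT => h; exact: (le_trans Ts0 (ltW h)).
have iC2 := C_int (measurable_itv `]Ts, +oo[) sub2 pC.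
have hsplit : `[0%R, +oo[%classic = `[0%R, Ts]%classic `|` `]Ts, +oo[%classic :> set R.
  by rewrite -(@itv_bndbnd_setU _ _ (BLeft 0) (BRight Ts) (BInfty _ false)) // bnd_simp.
have mC := (integrableP _ _ _ pC.2).1.
have eqint : (\int[@lebesgue_measure R]_(t in `[0%R, +oo[) (C t)%:E =
   \int[@lebesgue_measure R]_(t in `[0%R, Ts]) (C t)%:E +
   \int[@lebesgue_measure R]_(t in `]Ts, +oo[) (C t)%:E)%E.
  rewrite hsplit ge0_integral_setU //.
  - by rewrite -hsplit.
  - by move=> x; rewrite -hsplit /= in_itv /= andbT => x0; rewrite lee_fin pC.1.
  - apply/disj_set2P; rewrite -subset0 => x [] /=; rewrite !in_itv /= andbT.
    by move=> /andP [_ a] b; move: (lt_le_trans b a); rewrite ltxx.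
have finTs : (\int[@lebesgue_measure R]_(t in `[0%R, Ts]) (C t)%:E)%E \is a fin_num.
  by apply: integrable_fin_num => //.
have fin2 : (\int[@lebesgue_measure R]_(t in `]Ts, +oo[) (C t)%:E)%E \is a fin_num.
  by apply: integrable_fin_num => //.
have I1A : (\int[@lebesgue_measure R]_(t in `[0%R, Ts]) (C t)%:E)%E = A%:E.
  by rewrite -(fineK finTs); move: CeqA; rewrite /Rintegral => ->.
have I2 : (\int[@lebesgue_measure R]_(t in `]Ts, +oo[) (C t)%:E)%E = 0%E.
  move: eqint; rewrite I1A -(fineK fin2); move: hA; rewrite /AUC => -> /eqP.
  rewrite -EFinD eqe => /eqP h; congr EFin; lra.
have ae2 : (EFin \o C) = (cst 0%E) %[ae (@lebesgue_measure R) in `]Ts, +oo[%classic].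
  apply: (ae_eq_integral_abs (@lebesgue_measure R) (measurable_itv _) _).1.
    exact: (integrableP _ _ _ iC2).1.
  under eq_integral => t ht.
    rewrite gee0_abs; last first.
      by move: ht; rewrite inE => /sub2; rewrite /= in_itv /= andbT => t0; rewrite lee_fin pC.1.
    over.
  exact: I2.
have FF := ae_filter_ringOfSetsType (@lebesgue_measure R).
have ae3 : (EFin \o C) = (cst copt%:E) %[ae (@lebesgue_measure R) in `[0%R, Ts]%classic].
  apply: (@filterS _ _ FF _ _ _ ae1) => t h tin; move: (h tin) => /= /eqP; rewrite eqe => /eqP.
  move=> /pt -> //; move: tin; rewrite /= in_itv /= => /andP [t0 _]; exact: pC.1.
have TsE : Ts = A / copt.
  have : (\int[@lebesgue_measure R]_(x in `[0%R, Ts]) (EFin \o C) x =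
      \int[@lebesgue_measure R]_(x in `[0%R, Ts]) (cst copt%:E) x)%E.
    apply: ae_eq_integral => //; first exact: (integrableP _ _ _ iC).1.
  rewrite I1A.
  have := integral_cst (@lebesgue_measure R) (measurable_itv `[0%R, Ts]) copt%:E.
  move=> /= ->; have := @mu_itv R 0 Ts Ts0; move=> /= ->.
  rewrite subr0 -EFinM => /eqP; rewrite eqe => /eqP ->.
  by rewrite [copt * Ts]mulrC mulfK // gt_eqF.
apply: (filterS2 FF _ ae1 ae2) => t h1 h2 t0.
rewrite /box -TsE t0 /=; case: (leP t Ts) => tTs.
  have : `[0%R, Ts]%classic t by rewrite /= in_itv /= t0 tTs.
  move=> /h1 /= /eqP; rewrite eqe => /eqP; apply: pt; exact: pC.1.
have : `]Ts, +oo[%classic t by rewrite /= in_itv /= tTs.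
by move=> /h2 /= /eqP; rewrite eqe => /eqP.
Qed.

Unset Implicit Arguments. Set Strict Implicit.

Theorem corollary1 (R : realType) (k : R -> R) (r kmax A : R) :
  0 < r ->
  (* (A1) *)
  k 0 = 0 ->
  {within `[0%R, +oo[, continuous k} ->
  (forall x y, 0 <= x -> x < y -> k x < k y) ->
  (forall c, 0 < c -> derivable k c 1 /\ derivable (derive1 k) c 1) ->
  (* (A2) *)
  k x @[x --> +oo] --> kmax ->
  (* (A3) *)
  ((forall c, 0 < c -> derive1 (derive1 k) c < 0) \/
   (exists cinfl, 0 < cinfl /\
      (forall c, 0 < c -> c < cinfl -> 0 < derive1 (derive1 k) c) /\
      (forall c, cinfl < c -> derive1 (derive1 k) c < 0))) ->
  (* alpha > 1 *)
  1 < kmax / r ->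
  0 < A ->
  exists copt : R,
    [/\ 0 < copt /\ derive1 k copt = (k copt - r) / copt /\
        (forall c, 0 < c -> derive1 k c = (k c - r) / c -> c = copt),
        profile (box copt (A / copt)) /\ AUC (box copt (A / copt)) = A%:E,
        LRmax k r (box copt (A / copt)) =
          ((ln 10)^-1 * ((k copt - r) / copt) * A)%:E,
        (forall C, profile C -> AUC C = A%:E ->
           (LRmax k r C <= LRmax k r (box copt (A / copt)))%E) &
        (forall C, profile C -> AUC C = A%:E ->
           LRmax k r C = LRmax k r (box copt (A / copt)) ->
           {ae (@lebesgue_measure R), forall t,
              0 <= t -> C t = box copt (A / copt) t})].
Proof.
move=> r0 k0 kc mono kd hk A3 alpha A0.
have rk : r < kmax by move: alpha; rewrite ltr_pdivlMr // mul1r.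
have [copt [s [c0 eqs s0 hb der]]] := copt_exists r0 k0 kc mono kd hk rk.
have kb := k_lt_kmax mono hk.
have sE : s = (k copt - r) / copt by rewrite eqs mulfK // gt_eqF.
have hh0 : forall c, 0 < c -> derive1 k c = (k c - r) / c -> hh k r c = 0.
  by move=> c cp hc; rewrite /hh hc mulrC divfK ?gt_eqF //; ring.
have uq0 : forall c, 0 < c -> derive1 k c = (k c - r) / c -> c = copt.
  move=> c cp hc; apply: (hh_unique r0 k0 kc kd A3 cp c0 (hh0 c cp hc)).
  by apply: hh0 => //; rewrite der sE.
have uq : forall c, 0 < c -> k c - r = s * c -> c = copt.
  move=> c cp e; apply: uq0 => //.
  rewrite (@fermat _ k r s c cp); first by rewrite e mulfK // gt_eqF.
    by move=> x x0; exact: (kd x x0).1.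
  by move=> x x0; rewrite e subrr; have := hb x (ltW x0); lra.
have T0 : 0 <= A / copt by rewrite divr_ge0 // ltW.
have [pB aB] := box_profile c0 T0.
rewrite [copt * _]mulrC divfK ?gt_eqF // in aB.
have LRB : LRmax k r (box copt (A / copt)) = ((ln 10)^-1 * ((k copt - r) / copt) * A)%:E.
  apply/eqP; rewrite eq_le; apply/andP; split.
    by rewrite -sE; apply: (LRmax_le (ltW r0) k0 mono kb hb (ltW s0) pB aB).
  apply: ereal_sup_ubound; exists (A / copt); first by rewrite /= in_itv /= T0.
  by rewrite box_LR //; congr EFin; field; rewrite !gt_eqF ?ln10_gt0.
exists copt; split => //.
- split => //; split; last exact: uq0.
  by rewrite der sE.
- by move=> C pC hA; rewrite LRB -sE; exact: (LRmax_le (ltW r0) k0 mono kb hb (ltW s0) pC hA).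
move=> C pC hA; rewrite LRB -sE => hLR.
have r2 : 0 < r / 2 by rewrite divr_gt0.
have [d [d0 kdd]] := k_small kc k0 r2.
have [Ts Ts0 GTs] := sup_attained r0 k0 mono kb s0 hb d0 kdd A0 pC hA hLR.
exact: (ae_from_Ts r0 k0 mono kb s0 c0 hb uq pC hA Ts0 GTs).
Qed.
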